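(* Let $n\ge1$, $\gamma,\delta\in(0,1]$ and $c>0$. Set $j:=\lceil1/\gamma\rceil$, $\theta:=j-1/\gamma\in[0,1)$, and $$\omega_\star:=\delta^{\frac{1+\theta}{2(\theta+2/\gamma)}},\qquad R_\star:=\Big(\frac{\delta^{\frac{1+\theta}{2}}}{c^jc_{n,j}}\Big)^{\frac{1}{2j}},$$ where $c_{n,j}>0$ is a constant depending only on $n,j$ with the property stated in the context. Assume $\varphi:[0,R_\star]\to\mathbb{R}$ satisfies $$r^{1-n}(r^{n-1}\varphi')'=\frac{c\,\omega_\star}{\delta}\varphi^{1+\gamma}\ \text{ in }(0,R_\star),\qquad\varphi(0)=1,\qquad\varphi'(0)=0.$$ Then $(\omega_\star\delta)^{1/\gamma}\varphi(R_\star)\ge\delta$.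
   Context: Property of $c_{n,k}$ ($k=1,2,\dots$): for all $\lambda,R>0$, $\alpha>1$ and every nonnegative solution $\phi:[0,R]\to\mathbb{R}$ of $r^{1-n}(r^{n-1}\phi')'=\lambda\phi^\alpha$ in $(0,R)$, $\phi(0)=1$, $\phi'(0)=0$, one has $\phi(r)\ge c_{n,k}\lambda^kr^{2k}$ for all $r\in(0,R)$ (such constants, depending only on $n,k$, exist). Here $c_{n,j}$ is this constant with $k=j$. *)

(* Defs.v *)
From Stdlib Require Import Reals Lra.
From Coquelicot Require Import Coquelicot.
Open Scope R_scope.

(* Real power x^a for x >= 0 (0^a = 0 for a > 0); value 0 for x <= 0
   (only nonnegative arguments are mathematically meaningful). *)
Definition rpow (x a : R) : R := if Rlt_dec 0 x then exp (a * ln x) else 0.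

Definition radial_solution (n : nat) (lam alpha Rad : R) (phi : R -> R) : Prop :=
  exists dphi : R -> R,
    (forall r, 0 < r < Rad -> is_derive phi r (dphi r)) /\
    (forall r, 0 < r < Rad ->
       exists D, is_derive (fun s => s ^ (n - 1) * dphi s) r D /\
                 / r ^ (n - 1) * D = lam * rpow (phi r) alpha) /\
    phi 0 = 1 /\
    filterlim (fun h => (phi h - phi 0) / h) (at_right 0) (locally 0) /\
    filterlim phi (at_left Rad) (locally (phi Rad)).

Definition cnk_property (n k : nat) (C : R) : Prop :=
  forall (lam Rad alpha : R) (phi : R -> R),
    0 < lam -> 0 < Rad -> 1 < alpha ->
    (forall r, 0 <= r <= Rad -> 0 <= phi r) ->
    radial_solution n lam alpha Rad phi ->
    forall r, 0 < r < Rad -> phi r >= C * lam ^ k * r ^ (2 * k).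

(* Main.v *)
Require Import Defs.
From Stdlib Require Import Reals Lra.
From Coquelicot Require Import Coquelicot.
Open Scope R_scope.

Lemma lim_right0 (f : R -> R) l : filterlim f (at_right 0) (locally l) ->
  forall eps, 0 < eps -> exists d, 0 < d /\ forall h, 0 < h < d -> Rabs (f h - l) < eps.
Proof.
  intros H eps He. apply filterlim_locally with (eps := mkposreal eps He) in H.
  destruct H as [d Hd]. exists d. split; [apply cond_pos|].
  intros h Hh. apply (Hd h).
  - unfold ball; simpl; unfold AbsRing_ball, abs, minus, plus, opp; simpl.
    rewrite Rabs_right; lra.
  - lra.
Qed.

Lemma lim_left (f : R -> R) x l : filterlim f (at_left x) (locally l) ->
  forall eps, 0 < eps -> exists d, 0 < d /\ forall h, x - d < h < x -> Rabs (f h - l) < eps.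
Proof.
  intros H eps He. apply filterlim_locally with (eps := mkposreal eps He) in H.
  destruct H as [d Hd]. exists d. split; [apply cond_pos|].
  intros h Hh. apply (Hd h).
  - unfold ball; simpl; unfold AbsRing_ball, abs, minus, plus, opp; simpl.
    rewrite Rabs_left; lra.
  - lra.
Qed.

Lemma cont_eps (f : R -> R) x : continuous f x ->
  forall eps, 0 < eps -> exists d, 0 < d /\ forall h, Rabs (h - x) < d -> Rabs (f h - f x) < eps.
Proof.
  intros H eps He. apply filterlim_locally with (eps := mkposreal eps He) in H.
  destruct H as [d Hd]. exists d. split; [apply cond_pos|].
  intros h Hh. apply (Hd h). exact Hh.
Qed.

Lemma mono (g : R -> R) a b :
  (forall r, a < r < b -> exists D, is_derive g r D /\ 0 <= D) ->
  forall x y, a < x -> x <= y -> y < b -> g x <= g y.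
Proof.
  intros H x y Hx Hxy Hy.
  destruct (Req_dec x y) as [->|Hne]; [lra|].
  destruct (MVT_gen g x y (fun r => Derive g r)) as [z [Hz Heq]].
  - intros r Hr. rewrite Rmin_left in Hr by lra. rewrite Rmax_right in Hr by lra.
    destruct (H r ltac:(lra)) as [D [HD _]].
    rewrite (is_derive_unique _ _ _ HD). exact HD.
  - intros r Hr. rewrite Rmin_left in Hr by lra. rewrite Rmax_right in Hr by lra.
    apply (proj2 (continuity_pt_filterlim g r)). apply (@ex_derive_continuous R_AbsRing R_NormedModule).
    destruct (H r ltac:(lra)) as [D [HD _]]. exists D; exact HD.
  - rewrite Rmin_left in Hz by lra. rewrite Rmax_right in Hz by lra.
    destruct (H z ltac:(lra)) as [D [HD HD0]].
    rewrite (is_derive_unique _ _ _ HD) in Heq. nra.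
Qed.

Lemma rpow_ge0 x a : 0 <= rpow x a.
Proof. unfold rpow. destruct (Rlt_dec 0 x). left; apply exp_pos. lra. Qed.

Lemma quot_bound (f : R -> R) h eps : 0 < h -> Rabs ((f h - f 0) / h - 0) < eps ->
  - eps * h < f h - f 0 < eps * h.
Proof.
  intros Hh H. apply Rabs_def2 in H. destruct H as [H1 H2].
  assert (E : f h - f 0 = ((f h - f 0) / h - 0) * h) by (field; lra).
  rewrite E. split; nra.
Qed.

Lemma sol_ge1 n lam alpha R phi : 0 < lam -> radial_solution n lam alpha R phi ->
  (forall r, 0 < r < R -> 1 <= phi r) /\ (forall r, 0 <= r <= R -> 0 <= phi r).
Proof.
  intros Hlam [dphi [Hd [Hode [H0 [Hl0 HlR]]]]].
  set (g := fun s => s ^ (n - 1) * dphi s).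
  assert (Hg : forall x y, 0 < x -> x <= y -> y < R -> g x <= g y).
  { apply mono. intros r Hr. destruct (Hode r Hr) as [D [HD Heq]].
    exists D. split; [exact HD|].
    assert (Hp : 0 < r ^ (n - 1)) by (apply pow_lt; lra).
    assert (E : D = r ^ (n - 1) * (lam * rpow (phi r) alpha)).
    { apply (Rmult_eq_reg_l (/ r ^ (n - 1))); [|apply Rinv_neq_0_compat; lra].
      rewrite Heq. field. lra. }
    rewrite E. apply Rmult_le_pos; [lra|]. apply Rmult_le_pos; [lra|apply rpow_ge0]. }
  assert (Hdp : forall r, 0 < r < R -> 0 <= dphi r).
  { intros r0 Hr0. destruct (Rle_lt_dec 0 (dphi r0)) as [?|Hneg]; [assumption|exfalso].
    set (m := - dphi r0).
    assert (Hs : forall s, 0 < s <= r0 -> dphi s <= - m).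
    { intros s Hs. specialize (Hg s r0 ltac:(lra) ltac:(lra) ltac:(lra)). unfold g in Hg.
      assert (P1 : 0 < s ^ (n - 1)) by (apply pow_lt; lra).
      assert (P2 : s ^ (n - 1) <= r0 ^ (n - 1)) by (apply pow_incr; lra).
      unfold m. destruct (Rle_lt_dec (dphi s) (dphi r0)); [lra|].
      exfalso. nra. }
    assert (Hdec : forall h r, 0 < h -> h <= r -> r < r0 -> phi r + m * r <= phi h + m * h).
    { intros h r Hh Hhr Hr.
      assert (Hm : forall x y, 0 < x -> x <= y -> y < r0 ->
                 (fun s => -(phi s + m * s)) x <= (fun s => -(phi s + m * s)) y).
      { apply mono. intros s Hs'. eexists; split.
        - apply (is_derive_opp (fun s => phi s + m * s)).
          apply (is_derive_plus phi (fun s => m*s)). apply Hd; lra.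
          apply is_derive_scal. apply is_derive_id.
        - simpl. unfold opp, plus, scal, one; simpl. unfold mult; simpl.
          specialize (Hs s ltac:(lra)). lra. }
      specialize (Hm h r Hh Hhr Hr). simpl in Hm. lra. }
    assert (Hm0 : 0 < m) by (unfold m; lra).
    destruct (lim_right0 _ _ Hl0 (m / 4) ltac:(lra)) as [d [Hd0 Hdd]].
    set (r := Rmin d r0 / 2).
    assert (Hr1 : 0 < r) by (unfold r; apply Rmin_case; lra).
    assert (Hr2 : r < d) by (unfold r; assert (Rmin d r0 <= d) by apply Rmin_l; lra).
    assert (Hr3 : r < r0) by (unfold r; assert (Rmin d r0 <= r0) by apply Rmin_r; lra).
    pose proof (quot_bound phi r (m/4) Hr1 (Hdd r ltac:(lra))) as Q1.
    pose proof (quot_bound phi (r/2) (m/4) ltac:(lra) (Hdd (r/2) ltac:(lra))) as Q2.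
    pose proof (Hdec (r/2) r ltac:(lra) ltac:(lra) Hr3).
    nra. }
  assert (Hinc : forall h r, 0 < h -> h <= r -> r < R -> phi h <= phi r).
  { apply mono. intros s Hs. exists (dphi s). split; [apply Hd; lra| apply Hdp; lra]. }
  assert (H1 : forall r, 0 < r < R -> 1 <= phi r).
  { intros r Hr. destruct (Rle_lt_dec 1 (phi r)) as [?|Hlt]; [assumption|exfalso].
    destruct (lim_right0 _ _ Hl0 1 ltac:(lra)) as [d [Hd0 Hdd]].
    set (e := 1 - phi r).
    set (h := Rmin d (Rmin r e) / 2).
    assert (Hh1 : 0 < h) by (unfold h, e; repeat apply Rmin_case; lra).
    assert (Hh2 : h < d) by (unfold h; assert (Rmin d (Rmin r e) <= d) by apply Rmin_l; lra).
    assert (Hh3 : h < r /\ h < e).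
    { unfold h. assert (Rmin d (Rmin r e) <= Rmin r e) by apply Rmin_r.
      assert (Rmin r e <= r) by apply Rmin_l. assert (Rmin r e <= e) by apply Rmin_r.
      unfold e in *. split; lra. }
    pose proof (quot_bound phi h 1 Hh1 (Hdd h ltac:(lra))) as Q.
    pose proof (Hinc h r Hh1 ltac:(lra) ltac:(lra)).
    unfold e in Hh3. nra. }
  split; [exact H1|].
  intros r Hr.
  destruct (Req_dec r 0) as [->|Hr0]; [rewrite H0; lra|].
  destruct (Req_dec r R) as [->|HrR]; [|apply Rle_trans with 1; [lra|apply H1; lra]].
  destruct (Rle_lt_dec 1 (phi R)) as [?|Hlt]; [lra|exfalso].
  destruct (lim_left _ _ _ HlR (1 - phi R) ltac:(lra)) as [d [Hd0 Hdd]].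
  set (y := R - Rmin d R / 2).
  assert (Hy : R - d < y < R /\ 0 < y).
  { unfold y. assert (Rmin d R <= d) by apply Rmin_l. assert (Rmin d R <= R) by apply Rmin_r.
    assert (0 < Rmin d R) by (apply Rmin_case; lra). lra. }
  specialize (Hdd y ltac:(lra)). specialize (H1 y ltac:(lra)).
  apply Rabs_def2 in Hdd. lra.
Qed.

Theorem lemma4p7 (n : nat) (gamma delta c : R) (j : nat) (cnj : R) (phi : R -> R) :
  (1 <= n)%nat ->
  0 < gamma <= 1 -> 0 < delta <= 1 -> 0 < c ->
  (* j = ceil(1/gamma) *)
  INR j - 1 < 1 / gamma <= INR j ->
  0 < cnj -> cnk_property n j cnj ->
  let theta := INR j - 1 / gamma in
  let omega := Rpower delta ((1 + theta) / (2 * (theta + 2 / gamma))) in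
  let Rstar := Rpower (Rpower delta ((1 + theta) / 2) / (c ^ j * cnj)) (1 / (2 * INR j)) in
  radial_solution n (c * omega / delta) (1 + gamma) Rstar phi ->
  Rpower (omega * delta) (1 / gamma) * phi Rstar >= delta.
Proof.
  intros Hn Hg Hd Hc Hj Hcnj Hcnk theta omega Rstar Hsol.
  assert (Hig : 1 <= 1 / gamma).
  { apply (Rmult_le_reg_l gamma); [lra|]. field_simplify; lra. }
  assert (Hj1 : 1 <= INR j) by lra.
  assert (Hth : 0 <= theta) by (unfold theta; lra).
  set (L := ln delta).
  set (a := (1 + theta) / (2 * (theta + 2 / gamma))).
  set (b := (1 + theta) / 2).
  assert (Hdel : delta = exp L) by (unfold L; rewrite exp_ln; lra).
  assert (Hom : omega = exp (a * L)) by (unfold omega, Rpower; fold L a; reflexivity).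
  assert (Hom0 : 0 < omega) by (rewrite Hom; apply exp_pos).
  assert (HcP : 0 < c ^ j) by (apply pow_lt; lra).
  set (X := exp (b * L) / (c ^ j * cnj)).
  assert (HX : 0 < X) by (unfold X; apply Rdiv_lt_0_compat; [apply exp_pos| nra]).
  assert (HRs : Rstar = exp (1 / (2 * INR j) * ln X)) by reflexivity.
  assert (HRs0 : 0 < Rstar) by (rewrite HRs; apply exp_pos).
  assert (HRs2 : Rstar ^ (2 * j) = X).
  { rewrite <- Rpower_pow by exact HRs0. rewrite mult_INR. unfold Rpower.
    rewrite HRs, ln_exp. rewrite <- (exp_ln X) at 2 by exact HX. f_equal.
    simpl. field. lra. }
  set (lam := c * omega / delta).
  assert (Hlam : 0 < lam) by (unfold lam; apply Rdiv_lt_0_compat; nra).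
  set (K := cnj * lam ^ j * Rstar ^ (2 * j)).
  assert (HK : K <= phi Rstar).
  { destruct (sol_ge1 _ _ _ _ _ Hlam Hsol) as [_ Hnn].
    assert (Hb : forall r, 0 < r < Rstar -> phi r >= cnj * lam ^ j * r ^ (2 * j)).
    { intros r Hr. apply (Hcnk lam Rstar (1 + gamma) phi Hlam HRs0 ltac:(lra) Hnn Hsol r Hr). }
    destruct (Rle_lt_dec K (phi Rstar)) as [?|Hlt]; [assumption|exfalso].
    destruct Hsol as [? [_ [_ [_ [_ HlR]]]]].
    destruct (lim_left _ _ _ HlR ((K - phi Rstar) / 2) ltac:(lra)) as [d1 [Hd1 Hdd1]].
    assert (Hcont : continuous (fun r => cnj * lam ^ j * r ^ (2 * j)) Rstar).
    { apply (@ex_derive_continuous R_AbsRing R_NormedModule). auto_derive. auto. }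
    destruct (cont_eps _ _ Hcont ((K - phi Rstar) / 2) ltac:(lra)) as [d2 [Hd2 Hdd2]].
    set (m := Rmin d1 (Rmin d2 Rstar)).
    assert (Hm : 0 < m /\ m <= d1 /\ m <= d2 /\ m <= Rstar).
    { unfold m. assert (Rmin d1 (Rmin d2 Rstar) <= d1) by apply Rmin_l.
      assert (Rmin d1 (Rmin d2 Rstar) <= Rmin d2 Rstar) by apply Rmin_r.
      assert (Rmin d2 Rstar <= d2) by apply Rmin_l. assert (Rmin d2 Rstar <= Rstar) by apply Rmin_r.
      repeat split; try lra. repeat apply Rmin_case; lra. }
    set (y := Rstar - m / 2).
    specialize (Hdd1 y ltac:(unfold y; lra)).
    specialize (Hdd2 y ltac:(unfold y; rewrite Rabs_left; lra)).
    specialize (Hb y ltac:(unfold y; lra)).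
    apply Rabs_def2 in Hdd1. apply Rabs_def2 in Hdd2. fold K in Hdd2. lra. }
  assert (Heq : Rpower (omega * delta) (1 / gamma) * K = delta).
  { unfold K. rewrite HRs2. unfold lam.
    replace ((c * omega / delta) ^ j) with (c ^ j * omega ^ j * / delta ^ j) by (unfold Rdiv; rewrite !Rpow_mult_distr, pow_inv; reflexivity).
    rewrite <- (Rpower_pow j omega) by exact Hom0.
    rewrite <- (Rpower_pow j delta) by lra.
    unfold Rpower. rewrite ln_mult by lra. rewrite Hom, ln_exp. fold L.
    unfold X.
    assert (Hc0 : c ^ j <> 0) by lra.
    assert (E : 1 / gamma * (a * L + L) + INR j * (a * L) + b * L = L + INR j * L).
    { unfold a, b, theta. field. split; [lra|].
      assert (gamma * (1 / gamma) = 1) by (field; lra). nra. }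
    assert (E2 : exp (1 / gamma * (a * L + L)) * exp (INR j * (a * L)) * exp (b * L)
                 = exp L * exp (INR j * L)) by (rewrite <- !exp_plus; f_equal; lra).
    assert (Hexp : exp (INR j * L) <> 0) by (apply Rgt_not_eq, exp_pos).
    transitivity (exp L); [|symmetry; exact Hdel]. apply (Rmult_eq_reg_r (exp (INR j * L))); [|exact Hexp].
    rewrite <- E2. field. split; lra. }
  assert (HP : 0 < Rpower (omega * delta) (1 / gamma)) by (unfold Rpower; apply exp_pos).
  apply Rle_ge. rewrite <- Heq at 1. apply Rmult_le_compat_l; lra.
Qed.
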